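(* There exist neuronal networks $\mathcal N$ all of whose neurons satisfy Dale's Principle (each neuron is excitatory or inhibitory) but which are not a dynamical optimum conditioned to their synaptical equivalence class, i.e. there is a network $\mathcal N'$ synaptically equivalent to $\mathcal N$ with $\mathcal N'\not\sqsubseteq\mathcal N$.
   Context: A neuronal network $\mathcal N$ consists of $N\ge2$ neurons $i$. Neuron $i$ has a state $x_i=(x_{i,1},\dots,x_{i,k_i})$ in a compact manifold $M_i$ of finite dimension $k_i\ge1$, $x_{i,1}$ being its membrane potential; it has a threshold $\theta_i>0$ and a Lipschitz vector field $f_i$, and isolated it evolves by $dx_i/dt=F_i(x_i):=f_i(x_i)-\vec\theta_i\delta_{\theta_i}(x_{i,1})$, i.e. $\dot x_i=f_i(x_i)$ while $x_{i,1}<\theta_i$, and $x_{i,1}$ is reset to $0$ when it reaches $\theta_i$ (spike). For $i\neq j$ the synaptic action $\Delta_{i,j}$ is a real function of $x_j$, identically $0$ or of constant sign; when $i$ spikes, $x_{j,1}$ jumps by $\Delta_{i,j}$. The network evolves by $dx_j/dt=F_j(x_j)+\sum_{i\ne j}\vec\Delta_{i,j}\delta_{\theta_i}(x_{i,1})$ with the refractory/avalanche rule (a neuron pushed to its threshold by simultaneous actions spikes at that instant; each neuron spikes at most once per instant and ignores actions arriving at the instant it spikes). For every $X_0\in M:=M_1\times\cdots\times M_N$ the solution is assumed to exist and be unique, defining the dynamics $\Phi(X_0,t)$, $t\ge0$. No neuron is indifferent: for each $i$ some $\Delta_{i,j}\not\equiv0$. A neuron $i$ is excitatory (resp. inhibitory)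 if $\Delta_{i,j}>0$ (resp. $\Delta_{i,j}<0$) for every $j$ with $\Delta_{i,j}\not\equiv0$; it is mixed if it is neither. Dale's Principle: no neuron is mixed. Two neurons $i\ne j$ are structurally identical if $F_i=F_j$, $\Delta_{i,j}\equiv\Delta_{j,i}\equiv0$ and $\Delta_{h,i}=\Delta_{h,j}$ for all $h\ne i,j$. A homogeneous part is a maximal set of pairwise structurally identical neurons. A synaptical unit is a block of a partition of a homogeneous part $A$ into a minimal number of sets $U$ such that for each neuron $h\notin A$ at most one $i\in U$ has $\Delta_{i,h}\not\equiv0$. For a unit $U$ and homogeneous part $B$, $\Delta_{U,B}$ denotes $0$ if $\Delta_{i,h}\equiv0$ for all $i\in U,h\in B$, and otherwise the common value $\Delta_{i,h}$ ($h\in B$) for the unique $i\in U$ sending nonzero actions to $B$. Networks $\mathcal N,\mathcal N'$ are synaptically equivalent if they have the same number of homogeneous parts and the same number of synaptical units, and there is a bijection $\varphi$ from the units of $\mathcal N$ onto the units of $\mathcal N'$ mapping the units of each homogeneous part $B$ onto all units of a homogeneous part $\varphi(B)$ of $\mathcal N'$, such that $\Delta_{U,B}=\Delta_{\varphi(U),\varphi(B)}$ for all units $U$ and parts $B$, and $F_i=F_{i'}$ for all $i\in U$, $i'\in\varphi(U)$. $\mathcal N'\sqsubseteq\mathcal N$ means: there is a continuous injective $\psi:M'\to M$ with $\psi(\Phi'(X'_0,t))=\Phi(\psi(X'_0),t)$ for all $X'_0\in M'$, $t\ge0$, where $\Phi,\Phi'$ are the dynamics of $\mathcal N,\mathcal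 N'$ on $M,M'$. A network $\mathcal N$ is a dynamical optimum conditioned to its synaptical equivalence class $\mathcal C$ if $\mathcal N'\sqsubseteq\mathcal N$ for all $\mathcal N'\in\mathcal C$. *)

(* Defs.v *)
From Stdlib Require Import Reals Lra Lia Arith Bool.
Open Scope R_scope.

(** Neurons are 0 .. nN-1.  Neuron i has state x_i : nat -> R, whose relevant
   coordinates are 0 .. kk i - 1 (coordinate 0 = membrane potential x_{i,1});
   its state space M_i is the compact box  prod_{m < kk i} [lo i m, hi i m]
   in R^{kk i} (coordinates >= kk i are fixed to 0).  A global state is
   X : nat -> nat -> R, X i = state of neuron i. *)
Record Net : Type := mkNet {
  nN : nat;
  kk : nat -> nat;
  lo : nat -> nat -> R;
  hi : nat -> nat -> R;
  th : nat -> R;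
  fv : nat -> (nat -> R) -> (nat -> R);
  dl : nat -> nat -> (nat -> R) -> R           (* dl i j = Delta_{i,j}, a function of x_j *)
}.

Fixpoint sumR (n : nat) (g : nat -> R) : R :=
  match n with O => 0 | S n' => sumR n' g + g n' end.

Fixpoint sumN (n : nat) (g : nat -> nat) : nat :=
  match n with O => O | S n' => (sumN n' g + g n')%nat end.

Definition InMi (n : Net) (i : nat) (x : nat -> R) : Prop :=
  (forall m, (m < kk n i)%nat -> lo n i m <= x m <= hi n i m) /\
  (forall m, (kk n i <= m)%nat -> x m = 0).

Definition InM (n : Net) (X : nat -> nat -> R) : Prop :=
  (forall i, (i < nN n)%nat -> InMi n i (X i)) /\
  (forall i m, (nN n <= i)%nat -> X i m = 0).

Definition normi (n : Net) (i : nat) (x : nat -> R) : R :=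
  sumR (kk n i) (fun m => Rabs (x m)).

Definition dist (n : Net) (X Y : nat -> nat -> R) : R :=
  sumR (nN n) (fun i => sumR (kk n i) (fun m => Rabs (X i m - Y i m))).

Definition Zero (n : Net) (i j : nat) : Prop :=
  forall x, InMi n j x -> dl n i j x = 0.
Definition NZ (n : Net) (i j : nat) : Prop := ~ Zero n i j.

(** * Dynamics: spikes, avalanche and resets.
   spk n Y s j : neuron j belongs to the set of neurons spiking at the current
   instant after s rounds of the avalanche, given the pre-jump state Y. *)
Fixpoint spk (n : Net) (Y : nat -> nat -> R) (s : nat) (j : nat) : bool :=
  match s with
  | O => Nat.ltb j (nN n) && (if Rle_dec (th n j) (Y j O) then true else false)
  | S s' => spk n Y s' j ||
      (Nat.ltb j (nN n) &&
       (if Rle_dec (th n j)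
              (Y j O + sumR (nN n) (fun i =>
                 if negb (Nat.eqb i j) && spk n Y s' i then dl n i j (Y j) else 0))
        then true else false))
  end.

(** The (final) set of neurons spiking at the instant: the avalanche
    stabilises after at most nN rounds. *)
Definition spikes (n : Net) (Y : nat -> nat -> R) (j : nat) : bool :=
  spk n Y (nN n) j.

Definition jump (n : Net) (Y : nat -> nat -> R) : nat -> nat -> R :=
  fun i m =>
    if Nat.ltb i (nN n) && Nat.eqb m O then
      (if spikes n Y i then 0
       else Y i O + sumR (nN n) (fun h =>
              if negb (Nat.eqb h i) && spikes n Y h then dl n h i (Y i) else 0))
    else Y i m.

Definition FlowPt (n : Net) (X : R -> nat -> nat -> R) (s : R) : Prop :=
  (forall i, (i < nN n)%nat -> X s i O < th n i) /\
  (forall i m, (i < nN n)%nat -> (m < kk n i)%nat ->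
     derivable_pt_lim (fun u => X u i m) s (fv n i (X s i) m)).

(** Convention: X is left-continuous, X t is the state just before the
   (possible) spikes at instant t; immediately after t the state is
   jump n (X t).  Spike instants are locally finite. *)
Definition Sol (n : Net) (X0 : nat -> nat -> R) (X : R -> nat -> nat -> R) : Prop :=
  X 0 = X0 /\
  (forall t, 0 <= t -> InM n (X t)) /\
  (forall t, 0 <= t -> exists eps, 0 < eps /\
     (forall s, t < s < t + eps -> FlowPt n X s) /\
     (forall i m e, 0 < e -> exists d, 0 < d /\
        forall s, t < s < t + d -> Rabs (X s i m - jump n (X t) i m) < e)) /\
  (forall t, 0 < t -> exists eps, 0 < eps /\
     (forall s, 0 < s -> t - eps < s < t -> FlowPt n X s) /\
     (forall i m e, 0 < e -> exists d, 0 < d /\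
        forall s, t - d < s < t -> Rabs (X s i m - X t i m) < e)).

Definition IsNetwork (n : Net) : Prop :=
  (2 <= nN n)%nat /\
  (forall i, (i < nN n)%nat ->
     (1 <= kk n i)%nat /\
     (forall m, (m < kk n i)%nat -> lo n i m < hi n i m) /\
     0 < th n i /\
     (exists L, forall x y, InMi n i x -> InMi n i y ->
        normi n i (fun m => fv n i x m - fv n i y m)
          <= L * normi n i (fun m => x m - y m)) /\
     (forall j, (j < nN n)%nat -> j <> i ->
        Zero n i j \/
        (forall x, InMi n j x -> 0 < dl n i j x) \/
        (forall x, InMi n j x -> dl n i j x < 0)) /\
     (exists j, (j < nN n)%nat /\ j <> i /\ NZ n i j)) /\
  (forall X0, InM n X0 ->
     (exists X, Sol n X0 X) /\
     (forall X Y, Sol n X0 X -> Sol n X0 Y -> forall t, 0 <= t -> X t = Y t)).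

Definition Excitatory (n : Net) (i : nat) : Prop :=
  forall j, (j < nN n)%nat -> j <> i -> NZ n i j ->
    forall x, InMi n j x -> 0 < dl n i j x.
Definition Inhibitory (n : Net) (i : nat) : Prop :=
  forall j, (j < nN n)%nat -> j <> i -> NZ n i j ->
    forall x, InMi n j x -> dl n i j x < 0.

Definition Dale (n : Net) : Prop :=
  forall i, (i < nN n)%nat -> Excitatory n i \/ Inhibitory n i.

Definition SameF (n : Net) (i : nat) (n' : Net) (j : nat) : Prop :=
  kk n i = kk n' j /\
  (forall m, (m < kk n i)%nat -> lo n i m = lo n' j m /\ hi n i m = hi n' j m) /\
  th n i = th n' j /\
  (forall x, InMi n i x -> forall m, (m < kk n i)%nat -> fv n i x m = fv n' j x m).

Definition StructId (n : Net) (i j : nat) : Prop :=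
  (i < nN n)%nat /\ (j < nN n)%nat /\ i <> j /\
  SameF n i n j /\ Zero n i j /\ Zero n j i /\
  (forall h, (h < nN n)%nat -> h <> i -> h <> j ->
     forall x, InMi n i x -> dl n h i x = dl n h j x).

Definition HomPart (n : Net) (A : nat -> Prop) : Prop :=
  (forall i, A i -> (i < nN n)%nat) /\
  (exists i, A i) /\
  (forall i j, A i -> A j -> i <> j -> StructId n i j) /\
  (forall B : nat -> Prop,
     (forall i, A i -> B i) -> (forall i, B i -> (i < nN n)%nat) ->
     (forall i j, B i -> B j -> i <> j -> StructId n i j) ->
     forall i, B i -> A i).

(** g labels a partition of part p (neurons i with part i = p) whose blocks U
   satisfy: each neuron h outside the part receives nonzero actions from at
   most one neuron of U. *)
Definition AdmLab (n : Net) (part : nat -> nat) (p : nat) (g : nat -> nat) : Prop :=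
  forall i i' h, (i < nN n)%nat -> (i' < nN n)%nat -> (h < nN n)%nat ->
    part i = p -> part i' = p -> i <> i' -> g i = g i' ->
    part h <> p -> NZ n i h -> NZ n i' h -> False.

(** A unit structure of n: homogeneous parts labelled 0..nP-1 by part; the
   part p is partitioned into the c p synaptical units (p,b), b < c p, the
   neuron i lying in unit (part i, blk i); each such partition is admissible
   and has the minimal number of blocks. *)
Definition ValidUS (n : Net) (nP : nat) (part : nat -> nat) (c : nat -> nat)
    (blk : nat -> nat) : Prop :=
  (forall i, (i < nN n)%nat -> (part i < nP)%nat) /\
  (forall p, (p < nP)%nat -> HomPart n (fun i => (i < nN n)%nat /\ part i = p)) /\
  (forall i, (i < nN n)%nat -> (blk i < c (part i))%nat) /\
  (forall p b, (p < nP)%nat -> (b < c p)%nat ->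
     exists i, (i < nN n)%nat /\ part i = p /\ blk i = b) /\
  (forall p, (p < nP)%nat -> AdmLab n part p blk) /\
  (forall p, (p < nP)%nat -> forall (c0 : nat) (g : nat -> nat),
     (forall i, (i < nN n)%nat -> part i = p -> (g i < c0)%nat) ->
     AdmLab n part p g -> (c p <= c0)%nat).

Definition InUnit (n : Net) (part blk : nat -> nat) (p b i : nat) : Prop :=
  (i < nN n)%nat /\ part i = p /\ blk i = b.
Definition InPart (n : Net) (part : nat -> nat) (q h : nat) : Prop :=
  (h < nN n)%nat /\ part h = q.

(** DUB ... p b q D :  Delta_{U,B} = D  (on the state space of the neurons of
   B), for the unit U = (p,b) and the homogeneous part B = q. *)
Definition DUB (n : Net) (part blk : nat -> nat) (p b q : nat) (D : (nat -> R) -> R)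
  : Prop :=
  ((forall i h, InUnit n part blk p b i -> InPart n part q h -> h <> i -> Zero n i h) /\
   (forall h x, InPart n part q h -> InMi n h x -> D x = 0))
  \/
  (exists i, InUnit n part blk p b i /\
     (exists h, InPart n part q h /\ h <> i /\ NZ n i h) /\
     (forall h x, InPart n part q h -> h <> i -> InMi n h x -> dl n i h x = D x)).

(** Synaptic equivalence.  The unit bijection phi is (p,b) |-> (sg p, tau p b),
   sg being the induced bijection of homogeneous parts. *)
Definition SynEquiv (n n' : Net) : Prop :=
  exists (nP : nat) (part c blk : nat -> nat)
         (nP' : nat) (part' c' blk' : nat -> nat)
         (sg : nat -> nat) (tau : nat -> nat -> nat),
    ValidUS n nP part c blk /\ ValidUS n' nP' part' c' blk' /\
    nP = nP' /\
    sumN nP c = sumN nP' c' /\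
    (forall p, (p < nP)%nat -> (sg p < nP')%nat) /\
    (forall p q, (p < nP)%nat -> (q < nP)%nat -> sg p = sg q -> p = q) /\
    (forall q, (q < nP')%nat -> exists p, (p < nP)%nat /\ sg p = q) /\
    (forall p, (p < nP)%nat ->
       (forall b, (b < c p)%nat -> (tau p b < c' (sg p))%nat) /\
       (forall b b', (b < c p)%nat -> (b' < c p)%nat -> tau p b = tau p b' -> b = b') /\
       (forall b', (b' < c' (sg p))%nat -> exists b, (b < c p)%nat /\ tau p b = b')) /\
    (forall p b q, (p < nP)%nat -> (b < c p)%nat -> (q < nP)%nat ->
       exists D, DUB n part blk p b q D /\
                 DUB n' part' blk' (sg p) (tau p b) (sg q) D) /\
    (forall p b i i', (p < nP)%nat -> (b < c p)%nat ->
       InUnit n part blk p b i -> InUnit n' part' blk' (sg p) (tau p b) i' ->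
       SameF n i n' i').

Definition Embeds (n' n : Net) : Prop :=
  exists psi : (nat -> nat -> R) -> (nat -> nat -> R),
    (forall X, InM n' X -> InM n (psi X)) /\
    (forall X, InM n' X -> forall e, 0 < e -> exists d, 0 < d /\
       forall Y, InM n' Y -> dist n' X Y < d -> dist n (psi X) (psi Y) < e) /\
    (forall X Y, InM n' X -> InM n' Y -> psi X = psi Y -> X = Y) /\
    (forall X0 X' X, InM n' X0 -> Sol n' X0 X' -> Sol n (psi X0) X ->
       forall t, 0 <= t -> psi (X' t) = X t).

Definition DynOptimum (n : Net) : Prop :=
  forall n', IsNetwork n' -> SynEquiv n n' -> Embeds n' n.

(* Main.v *)
Require Import Defs.
From Stdlib Require Import Reals Lra Lia Arith Bool List FunctionalExtensionality.
Open Scope R_scope.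

Definition Dlt (x : nat -> R) : R := if Rlt_dec (x O) 1 then (1 - x O) / 10 else 1.

Definition mk (N : nat) (adj : nat -> nat -> bool) : Net :=
  mkNet N (fun _ => 1%nat) (fun _ _ => -1) (fun _ _ => 1) (fun _ => 1)
    (fun _ _ _ => 0) (fun i j x => if adj i j then Dlt x else 0).

Lemma sumR_ext n f g : (forall k, (k < n)%nat -> f k = g k) -> sumR n f = sumR n g.
Proof.
  induction n; simpl; intros H; [reflexivity|].
  rewrite IHn by (intros; apply H; lia). rewrite H by lia. reflexivity.
Qed.

Lemma sumR_le n f c : (forall k, (k < n)%nat -> f k <= c) -> sumR n f <= INR n * c.
Proof.
  induction n; cbn [sumR]; intros H; [simpl; lra|].
  rewrite S_INR. assert (H1 := H n ltac:(lia)).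
  assert (H2 : sumR n f <= INR n * c) by (apply IHn; intros; apply H; lia). lra.
Qed.

Lemma sumR_ge0 n f : (forall k, (k < n)%nat -> 0 <= f k) -> 0 <= sumR n f.
Proof.
  induction n; simpl; intros H; [lra|].
  assert (H1 := H n ltac:(lia)).
  assert (H2 : 0 <= sumR n f) by (apply IHn; intros; apply H; lia). lra.
Qed.

Lemma sumR_scal n a f : sumR n (fun k => a * f k) = a * sumR n f.
Proof. induction n; simpl; [ring|]. rewrite IHn. ring. Qed.

Lemma sumR_zero n f : (forall k, (k < n)%nat -> f k = 0) -> sumR n f = 0.
Proof.
  intros H. rewrite (sumR_ext n f (fun k => 0 * 0)).
  - rewrite sumR_scal. ring.
  - intros; rewrite H by lia; ring.
Qed.

Lemma Dlt_pos x : 0 < Dlt x.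
Proof. unfold Dlt. destruct (Rlt_dec (x O) 1); lra. Qed.

Lemma loc_const_deriv (g : R -> R) t eps : 0 < eps ->
  (forall u, Rabs (u - t) < eps -> g u = g t) -> derivable_pt_lim g t 0.
Proof.
  intros He Hc e Hpe. exists (mkposreal eps He). intros h Hh0 Hh. simpl in Hh.
  rewrite (Hc (t + h)) by (replace (t + h - t) with h by ring; exact Hh).
  replace ((g t - g t) / h - 0) with 0 by (field; auto). rewrite Rabs_R0. lra.
Qed.

Lemma const_on (g : R -> R) a b : (forall s, a < s < b -> derivable_pt_lim g s 0) ->
  forall s1 s2, a < s1 < b -> a < s2 < b -> g s1 = g s2.
Proof.
  intros H.
  assert (K : forall s1 s2, a < s1 < b -> a < s2 < b -> s1 < s2 -> g s1 = g s2).
  { intros s1 s2 H1 H2 H12.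
    destruct (MVT_cor2 g (fun _ => 0) s1 s2 H12) as [c [Hc _]].
    { intros c Hc. apply H. lra. }
    lra. }
  intros s1 s2 H1 H2. destruct (Rtotal_order s1 s2) as [h|[h|h]].
  - auto.
  - subst; auto.
  - symmetry; auto.
Qed.

Lemma eq_small c d : (forall e, 0 < e -> Rabs (c - d) < e) -> c = d.
Proof.
  intros H. destruct (Req_dec c d) as [|Hn]; auto. exfalso.
  assert (Hp : 0 < Rabs (c - d)) by (apply Rabs_pos_lt; lra).
  specialize (H _ Hp). lra.
Qed.

Section Gen.
Variable N : nat.
Variable adj : nat -> nat -> bool.
Hypothesis HN : (N <= 5)%nat.
Let n := mk N adj.

Definition sp (X : nat -> nat -> R) j : bool := if Rle_dec 1 (X j O) then true else false.

Lemma x0_in j : InMi n j (fun _ => 0).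
Proof. split; simpl; intros; lra || reflexivity. Qed.

Lemma zero_false i j : adj i j = false -> Zero n i j.
Proof. intros H x _. simpl. rewrite H. reflexivity. Qed.

Lemma nz_adj i j : NZ n i j -> adj i j = true.
Proof.
  intros H. destruct (adj i j) eqn:E; [reflexivity|]. exfalso; apply H, zero_false, E.
Qed.

Lemma adj_nz i j : adj i j = true -> NZ n i j.
Proof.
  intros H HZ. specialize (HZ _ (x0_in j)). simpl in HZ. rewrite H in HZ.
  pose proof (Dlt_pos (fun _ => 0)). lra.
Qed.

Lemma dl_bound Y i j : Y j O < 1 -> 0 <= dl n i j (Y j) <= (1 - Y j O) / 10.
Proof.
  intros H. simpl. destruct (adj i j); [|lra]. unfold Dlt.
  destruct (Rlt_dec (Y j O) 1); lra.
Qed.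

Lemma sum_bound Y j (b : nat -> bool) : Y j O < 1 ->
  0 <= sumR N (fun i => if b i then dl n i j (Y j) else 0) < 1 - Y j O.
Proof.
  intros H. split.
  - apply sumR_ge0. intros k _. destruct (b k); [apply dl_bound; auto| lra].
  - eapply Rle_lt_trans. apply sumR_le with (c := (1 - Y j O)/10).
    intros k _. destruct (b k); [apply dl_bound; auto|]. lra.
    assert (INR N <= 5) by (replace 5 with (INR 5) by (simpl; ring); apply le_INR; auto).
    assert (0 <= INR N) by apply pos_INR. nra.
Qed.

Lemma spk_stable Y (HY : forall j, (j < N)%nat -> Y j O <= 1) :
  forall s j, spk n Y s j = spk n Y O j.
Proof.
  induction s; intros j; [reflexivity|].
  change (spk n Y (S s) j) with (spk n Y s j ||
      (Nat.ltb j (nN n) &&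
       (if Rle_dec (th n j)
              (Y j O + sumR (nN n) (fun i =>
                 if negb (Nat.eqb i j) && spk n Y s i then dl n i j (Y j) else 0))
        then true else false))).
  rewrite IHs. destruct (spk n Y O j) eqn:E; [reflexivity|]. simpl.
  simpl in E. destruct (Nat.ltb j N) eqn:Ej; [|reflexivity]. simpl in E.
  destruct (Rle_dec 1 (Y j O)) as [|Hlt]; [discriminate|].
  apply Nat.ltb_lt in Ej.
  destruct (Rle_dec 1 _) as [Hc|]; [|reflexivity].
  exfalso. pose proof (sum_bound Y j (fun i => negb (Nat.eqb i j) && spk n Y s i)
     ltac:(lra)). simpl in H. lra.
Qed.

Lemma spikes_sp Y (HY : forall j, (j < N)%nat -> Y j O <= 1) j :
  spikes n Y j = Nat.ltb j N && sp Y j.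
Proof. unfold spikes. rewrite spk_stable by auto. reflexivity. Qed.


Lemma InM_bnd Y : InM n Y -> forall j, (j < N)%nat -> -1 <= Y j O <= 1.
Proof. intros [H _] j Hj. destruct (H j Hj) as [H1 _]. apply (H1 O). simpl; lia. Qed.

Lemma InM_bnd1 Y : InM n Y -> forall j, (j < N)%nat -> Y j O <= 1.
Proof. intros H j Hj. apply (InM_bnd Y H j Hj). Qed.

Lemma jump_other Y i m : ((N <= i)%nat \/ m <> O) -> jump n Y i m = Y i m.
Proof.
  intros H. unfold jump. simpl.
  destruct H as [H|H].
  - replace (Nat.ltb i N) with false by (symmetry; apply Nat.ltb_ge; auto). reflexivity.
  - replace (Nat.eqb m 0) with false by (symmetry; apply Nat.eqb_neq; auto).
    rewrite andb_false_r. reflexivity.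
Qed.

Lemma jump_pot Y i : InM n Y -> (i < N)%nat ->
  jump n Y i O = if sp Y i then 0 else Y i O + sumR N (fun h =>
              if negb (Nat.eqb h i) && spikes n Y h then dl n h i (Y i) else 0).
Proof.
  intros HY Hi. unfold jump. simpl nN.
  replace (Nat.ltb i N) with true by (symmetry; apply Nat.ltb_lt; auto). simpl.
  rewrite spikes_sp by (apply InM_bnd1; auto).
  replace (Nat.ltb i N) with true by (symmetry; apply Nat.ltb_lt; auto). reflexivity.
Qed.

Lemma jump_pot_bnd Y i : InM n Y -> (i < N)%nat -> -1 <= jump n Y i O < 1.
Proof.
  intros HY Hi. rewrite jump_pot by auto. unfold sp.
  destruct (Rle_dec 1 (Y i O)); [lra|].
  pose proof (InM_bnd Y HY i Hi).
  pose proof (sum_bound Y i (fun h => negb (Nat.eqb h i) && spikes n Y h) ltac:(lra)).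
  lra.
Qed.

Lemma jump_InM Y : InM n Y -> InM n (jump n Y).
Proof.
  intros HY. split.
  - intros i Hi. split.
    + intros m Hm. simpl in Hm. replace m with O by lia. simpl.
      pose proof (jump_pot_bnd Y i HY Hi). lra.
    + intros m Hm. simpl in Hm. rewrite jump_other by lia.
      destruct HY as [H _]. apply (H i Hi). auto.
  - intros i m Hi. rewrite jump_other by auto. destruct HY as [_ H]. apply H; auto.
Qed.

Lemma jump_fixed Y : InM n Y -> (forall i, (i < N)%nat -> Y i O < 1) -> jump n Y = Y.
Proof.
  intros HY Hl. apply functional_extensionality; intros i.
  apply functional_extensionality; intros m.
  destruct (le_lt_dec N i) as [Hi|Hi]. { apply jump_other; auto. }
  destruct (Nat.eq_dec m O) as [->|Hm]. 2:{ apply jump_other; auto. }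
  rewrite jump_pot by auto. unfold sp. destruct (Rle_dec 1 (Y i O)).
  { specialize (Hl i Hi); lra. }
  rewrite sumR_zero. ring.
  intros k Hk. rewrite spikes_sp by (apply InM_bnd1; auto). unfold sp.
  destruct (Rle_dec 1 (Y k O)). { specialize (Hl k Hk); lra. }
  rewrite !andb_false_r. reflexivity.
Qed.

Lemma jump_idem Y : InM n Y -> jump n (jump n Y) = jump n Y.
Proof.
  intros HY. apply jump_fixed. apply jump_InM; auto.
  intros i Hi. apply jump_pot_bnd; auto.
Qed.


Definition solX (X0 : nat -> nat -> R) (t : R) := if Rle_dec t 0 then X0 else jump n X0.

Lemma solX_pos X0 t : 0 < t -> solX X0 t = jump n X0.
Proof. intros H. unfold solX. destruct (Rle_dec t 0); [lra|reflexivity]. Qed.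

Lemma solX_flow X0 s : InM n X0 -> 0 < s -> FlowPt n (solX X0) s.
Proof.
  intros HX Hs. split.
  - intros i Hi. rewrite solX_pos by auto. simpl in Hi. apply jump_pot_bnd; auto.
  - intros i m Hi Hm. simpl. apply loc_const_deriv with (eps := s); auto.
    intros u Hu. apply Rabs_def2 in Hu. rewrite !solX_pos by lra. reflexivity.
Qed.

Lemma solX_sol X0 : InM n X0 -> Sol n X0 (solX X0).
Proof.
  intros HX. split; [|split; [|split]].
  - unfold solX. destruct (Rle_dec 0 0); [reflexivity|lra].
  - intros t Ht. unfold solX. destruct (Rle_dec t 0); auto. apply jump_InM; auto.
  - intros t Ht. exists 1. split; [lra|split].
    + intros s Hs. apply solX_flow; auto; lra.
    + intros i m e He. exists 1. split; [lra|]. intros s Hs.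
      rewrite solX_pos by lra.
      assert (E : jump n (solX X0 t) = jump n X0).
      { unfold solX. destruct (Rle_dec t 0); auto. apply jump_idem; auto. }
      rewrite E. replace (jump n X0 i m - jump n X0 i m) with 0 by ring.
      rewrite Rabs_R0; auto.
  - intros t Ht. exists t. split; auto. split.
    + intros s Hs _. apply solX_flow; auto.
    + intros i m e He. exists t. split; auto. intros s Hs.
      rewrite !solX_pos by lra. replace (jump n X0 i m - jump n X0 i m) with 0 by ring.
      rewrite Rabs_R0; auto.
Qed.


Lemma InM_other Z i m : InM n Z -> ((N <= i)%nat \/ m <> O) -> Z i m = 0.
Proof.
  intros [H1 H2] [H|H]. apply H2; auto.
  destruct (le_lt_dec N i) as [h|h]. apply H2; auto.
  destruct (H1 i h) as [_ H3]. apply H3. simpl; lia.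
Qed.

Lemma right_const X0 Y : Sol n X0 Y -> forall t, 0 <= t ->
  exists eps, 0 < eps /\ forall s, t < s < t + eps -> Y s = jump n (Y t).
Proof.
  intros [H0 [HM [HR HL]]] t Ht. destruct (HR t Ht) as [eps [He [HF HC]]].
  exists eps. split; auto. intros s Hs.
  apply functional_extensionality; intros i.
  apply functional_extensionality; intros m.
  destruct (le_lt_dec N i) as [Hi|Hi].
  { rewrite jump_other by auto. rewrite !InM_other with (Z := Y _) by (auto; apply HM; lra). reflexivity. }
  destruct (Nat.eq_dec m O) as [->|Hm].
  2:{ rewrite jump_other by auto. rewrite !InM_other with (Z := Y _) by (auto; apply HM; lra). reflexivity. }
  assert (Hc : forall s1 s2, t < s1 < t + eps -> t < s2 < t + eps -> Y s1 i O = Y s2 i O).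
  { apply (const_on (fun u => Y u i O)). intros u Hu.
    destruct (HF u Hu) as [_ Hd]. apply (Hd i O Hi). simpl; lia. }
  apply eq_small. intros e He'. destruct (HC i O e He') as [d [Hd Hd']].
  set (s' := t + Rmin d eps / 2).
  assert (0 < Rmin d eps) by (apply Rmin_pos; auto).
  assert (Rmin d eps <= d) by apply Rmin_l. assert (Rmin d eps <= eps) by apply Rmin_r.
  rewrite (Hc s s') by (auto; unfold s'; lra). apply Hd'. unfold s'; lra.
Qed.

Lemma left_const X0 Y : Sol n X0 Y -> forall t, 0 < t ->
  exists eps, 0 < eps /\ eps <= t /\ forall s, t - eps < s < t -> Y s = Y t.
Proof.
  intros [H0 [HM [HR HL]]] t Ht. destruct (HL t Ht) as [eps0 [He0 [HF HC]]].
  set (eps := Rmin eps0 t).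
  assert (0 < eps) by (apply Rmin_pos; auto).
  assert (eps <= eps0) by apply Rmin_l. assert (eps <= t) by apply Rmin_r.
  exists eps. split; auto. split; auto. intros s Hs.
  apply functional_extensionality; intros i.
  apply functional_extensionality; intros m.
  destruct (le_lt_dec N i) as [Hi|Hi].
  { rewrite !InM_other with (Z := Y _) by (auto; apply HM; lra). reflexivity. }
  destruct (Nat.eq_dec m O) as [->|Hm].
  2:{ rewrite !InM_other with (Z := Y _) by (auto; apply HM; lra). reflexivity. }
  assert (Hc : forall s1 s2, t - eps < s1 < t -> t - eps < s2 < t -> Y s1 i O = Y s2 i O).
  { apply (const_on (fun u => Y u i O)). intros u Hu.
    destruct (HF u ltac:(lra) ltac:(lra)) as [_ Hd]. apply (Hd i O Hi). simpl; lia. }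
  apply eq_small. intros e He'. destruct (HC i O e He') as [d [Hd Hd']].
  set (s' := t - Rmin d eps / 2).
  assert (0 < Rmin d eps) by (apply Rmin_pos; auto).
  assert (Rmin d eps <= d) by apply Rmin_l. assert (Rmin d eps <= eps) by apply Rmin_r.
  rewrite (Hc s s') by (auto; unfold s'; lra). apply Hd'. unfold s'; lra.
Qed.

Lemma loc_const X0 Y : Sol n X0 Y -> forall t, 0 < t ->
  exists eps, 0 < eps /\ forall s, Rabs (s - t) < eps -> Y s = Y t.
Proof.
  intros HS t Ht.
  destruct (left_const X0 Y HS t Ht) as [e1 [He1 [He1t H1]]].
  destruct (right_const X0 Y HS t ltac:(lra)) as [e2 [He2 H2]].
  assert (Hfix : jump n (Y t) = Y t).
  { rewrite <- (H1 (t - e1/2)) by lra. apply jump_fixed.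
    destruct HS as [_ [HM _]]. apply HM; lra.
    intros i Hi. destruct HS as [_ [_ [_ HL]]].
    destruct (HL t Ht) as [e3 [He3 [HF _]]].
    set (u := t - Rmin e1 e3 / 2).
    assert (0 < Rmin e1 e3) by (apply Rmin_pos; auto).
    assert (Rmin e1 e3 <= e1) by apply Rmin_l. assert (Rmin e1 e3 <= e3) by apply Rmin_r.
    rewrite (H1 (t - e1/2)) by lra. rewrite <- (H1 u) by (unfold u; lra).
    destruct (HF u ltac:(unfold u; lra) ltac:(unfold u; lra)) as [Hp _]. apply Hp; auto. }
  exists (Rmin e1 e2). split. apply Rmin_pos; auto.
  assert (Rmin e1 e2 <= e1) by apply Rmin_l. assert (Rmin e1 e2 <= e2) by apply Rmin_r.
  intros s Hs. apply Rabs_def2 in Hs.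
  destruct (Rtotal_order s t) as [h|[h|h]].
  - apply H1; lra.
  - subst; reflexivity.
  - transitivity (jump n (Y t)); [apply H2; lra | exact Hfix].
Qed.

Lemma sol_unique X0 Y : InM n X0 -> Sol n X0 Y -> forall t, 0 < t -> Y t = jump n X0.
Proof.
  intros HX HS t Ht.
  destruct (right_const X0 Y HS 0 ltac:(lra)) as [e0 [He0 H0]].
  assert (HY0 : Y 0 = X0) by apply HS. rewrite HY0 in H0.
  set (s0 := Rmin (e0/2) t).
  assert (0 < s0) by (apply Rmin_pos; lra).
  assert (s0 <= e0/2) by apply Rmin_l. assert (s0 <= t) by apply Rmin_r.
  rewrite <- (H0 s0) by lra.
  apply functional_extensionality; intros i.
  apply functional_extensionality; intros m.
  destruct (Req_dec s0 t) as [->|Hne]; [reflexivity|].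
  apply (const_on (fun u => Y u i m) 0 (t + 1)); try lra.
  intros u Hu. destruct (loc_const X0 Y HS u ltac:(lra)) as [e [He Hc]].
  apply loc_const_deriv with e; auto. intros v Hv. rewrite Hc; auto.
Qed.


Definition KK (X : nat -> nat -> R) i :=
  sumR N (fun h => if negb (Nat.eqb h i) && sp X h && adj h i then /10 else 0).

Lemma KK_bnd X i : 0 <= KK X i <= 1/2.
Proof.
  unfold KK. split.
  - apply sumR_ge0. intros k _. destruct (_ && _ && _); lra.
  - eapply Rle_trans. apply sumR_le with (c := /10). intros k _. destruct (_ && _ && _); lra.
    assert (INR N <= 5) by (replace 5 with (INR 5) by (simpl; ring); apply le_INR; auto).
    assert (0 <= INR N) by apply pos_INR. nra.
Qed.

Lemma jump_ns X i : InM n X -> (i < N)%nat -> sp X i = false ->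
  jump n X i O = X i O + (1 - X i O) * KK X i.
Proof.
  intros HX Hi Hs. rewrite jump_pot by auto. rewrite Hs. f_equal.
  unfold KK. rewrite <- sumR_scal. apply sumR_ext. intros k Hk.
  rewrite spikes_sp by (apply InM_bnd1; auto).
  replace (Nat.ltb k N) with true by (symmetry; apply Nat.ltb_lt; auto).
  assert (Hlt : X i O < 1).
  { unfold sp in Hs. destruct (Rle_dec 1 (X i O)); [discriminate|lra]. }
  simpl. destruct (negb (Nat.eqb k i)); simpl; [|ring].
  destruct (sp X k); simpl; [|ring]. destruct (adj k i); [|ring].
  unfold Dlt. destruct (Rlt_dec (X i O) 1); [|lra]. field.
Qed.

Lemma fiber X Y : InM n X -> InM n Y -> jump n X = jump n Y ->
  (forall j, (j < N)%nat -> sp X j = sp Y j) -> X = Y.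
Proof.
  intros HX HY HJ Hsp.
  apply functional_extensionality; intros i.
  apply functional_extensionality; intros m.
  destruct (le_lt_dec N i) as [Hi|Hi].
  { rewrite !InM_other with (Z := _) by auto. reflexivity. }
  destruct (Nat.eq_dec m O) as [->|Hm].
  2:{ rewrite !InM_other with (Z := _) by auto. reflexivity. }
  assert (HK : KK X i = KK Y i).
  { unfold KK. apply sumR_ext. intros k Hk. rewrite Hsp; auto. }
  pose proof (InM_bnd X HX i Hi). pose proof (InM_bnd Y HY i Hi).
  destruct (sp X i) eqn:E.
  - assert (E' : sp Y i = true) by (rewrite <- Hsp; auto).
    unfold sp in E, E'. destruct (Rle_dec 1 (X i O)); [|discriminate].
    destruct (Rle_dec 1 (Y i O)); [|discriminate]. lra.
  - assert (E' : sp Y i = false) by (rewrite <- Hsp; auto).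
    assert (H1 := jump_ns X i HX Hi E). assert (H2 := jump_ns Y i HY Hi E').
    rewrite HJ in H1. rewrite H2, HK in H1. pose proof (KK_bnd Y i).
    assert (Hz : (X i O - Y i O) * (1 - KK Y i) = 0) by lra.
    apply Rmult_integral in Hz. destruct Hz; lra.
Qed.

Definition kS (S : nat -> bool) j :=
  sumR N (fun h => if negb (Nat.eqb h j) && S h && adj h j then 1 else 0).

Lemma kS_bnd S j : 0 <= kS S j <= 5.
Proof.
  unfold kS. split.
  - apply sumR_ge0. intros k _. destruct (_ && _ && _); lra.
  - eapply Rle_trans. apply sumR_le with (c := 1). intros k _. destruct (_ && _ && _); lra.
    assert (INR N <= 5) by (replace 5 with (INR 5) by (simpl; ring); apply le_INR; auto).
    lra.
Qed.

Definition xS (S : nat -> bool) : nat -> nat -> R :=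
  fun j m => if Nat.ltb j N && Nat.eqb m O then
    (if S j then 1 else - kS S j / (10 - kS S j)) else 0.

Lemma xS_val S j : (j < N)%nat -> xS S j O = if S j then 1 else - kS S j / (10 - kS S j).
Proof.
  intros Hj. unfold xS. replace (Nat.ltb j N) with true by (symmetry; apply Nat.ltb_lt; auto).
  reflexivity.
Qed.

Lemma xS_nonpos S j : - kS S j / (10 - kS S j) <= 0 /\ -1 <= - kS S j / (10 - kS S j).
Proof.
  pose proof (kS_bnd S j). split.
  - assert (0 <= kS S j / (10 - kS S j)).
    { apply Rmult_le_pos; [lra|]. left; apply Rinv_0_lt_compat; lra. }
    unfold Rdiv in *. lra.
  - apply Rmult_le_reg_r with (10 - kS S j); [lra|]. field_simplify; lra.
Qed.

Lemma xS_InM S : InM n (xS S).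
Proof.
  split.
  - intros i Hi. split.
    + intros m Hm. simpl in Hm. replace m with O by lia. simpl. rewrite xS_val by auto.
      destruct (S i); [lra|]. pose proof (xS_nonpos S i); lra.
    + intros m Hm. simpl in Hm. unfold xS.
      replace (Nat.eqb m 0) with false by (symmetry; apply Nat.eqb_neq; lia).
      rewrite andb_false_r; reflexivity.
  - intros i m Hi. unfold xS. simpl in Hi.
    replace (Nat.ltb i N) with false by (symmetry; apply Nat.ltb_ge; auto). reflexivity.
Qed.

Lemma xS_sp S j : (j < N)%nat -> sp (xS S) j = S j.
Proof.
  intros Hj. unfold sp. rewrite xS_val by auto. destruct (S j).
  - destruct (Rle_dec 1 1); auto; lra.
  - pose proof (xS_nonpos S j). destruct (Rle_dec 1 _); auto; lra.
Qed.

Lemma xS_jump S : jump n (xS S) = fun _ _ => 0.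
Proof.
  apply functional_extensionality; intros i.
  apply functional_extensionality; intros m.
  destruct (le_lt_dec N i) as [Hi|Hi].
  { rewrite jump_other by auto. apply InM_other with (Z := xS S); auto. apply xS_InM. }
  destruct (Nat.eq_dec m O) as [->|Hm].
  2:{ rewrite jump_other by auto. apply InM_other with (Z := xS S); auto. apply xS_InM. }
  destruct (S i) eqn:E.
  - rewrite jump_pot by (auto; apply xS_InM). rewrite xS_sp, E by auto. reflexivity.
  - rewrite jump_ns by (auto; try apply xS_InM; rewrite xS_sp; auto).
    assert (HK : KK (xS S) i = kS S i / 10).
    { unfold KK, kS. unfold Rdiv. rewrite Rmult_comm, <- sumR_scal. apply sumR_ext.
      intros k Hk. rewrite xS_sp by auto. destruct (_ && _ && _); lra. }
    rewrite HK, xS_val, E by auto. pose proof (kS_bnd S i). field. lra.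
Qed.

End Gen.

Lemma mk_network N adj : (2 <= N)%nat -> (N <= 5)%nat ->
  (forall i, (i < N)%nat -> exists j, (j < N)%nat /\ j <> i /\ adj i j = true) ->
  IsNetwork (mk N adj).
Proof.
  intros H2 H5 Hind. split; [exact H2|split].
  - intros i Hi. split; [simpl; lia|]. split; [intros; simpl; lra|]. split; [simpl; lra|].
    split; [|split].
    + exists 0. intros x y _ _. unfold normi. simpl.
      replace (0 - 0) with 0 by ring. rewrite Rabs_R0. lra.
    + intros j Hj Hji. destruct (adj i j) eqn:E.
      * right; left. intros x _. simpl. rewrite E. apply Dlt_pos.
      * left. apply zero_false; auto.
    + destruct (Hind i Hi) as [j [Hj [Hji Ha]]]. exists j. split; auto. split; auto.
      apply adj_nz; auto.
  - intros X0 HX. split.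
    + exists (solX N adj X0). apply solX_sol; auto.
    + intros X Y HXs HYs t Ht. destruct (Rle_lt_or_eq_dec 0 t Ht) as [Hp|<-].
      * rewrite (sol_unique N adj H5 X0 X HX HXs t Hp).
        rewrite (sol_unique N adj H5 X0 Y HX HYs t Hp). reflexivity.
      * destruct HXs as [-> _]. destruct HYs as [-> _]. reflexivity.
Qed.

Lemma mk_dale N adj : Dale (mk N adj).
Proof.
  intros i Hi. left. intros j Hj Hji Hnz x _. apply nz_adj in Hnz. simpl. rewrite Hnz.
  apply Dlt_pos.
Qed.

Definition adj1 (i j : nat) : bool :=
  match i, j with
  | 0, 1 | 0, 2 | 1, 0 | 1, 2 | 2, 0 => true
  | _, _ => false end%nat.
Definition adj2 (i j : nat) : bool :=
  match i, j with
  | 0, 2 | 1, 3 | 2, 0 | 2, 1 | 2, 3 | 3, 0 | 3, 1 => true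
  | _, _ => false end%nat.

Definition n1 := mk 3 adj1.
Definition n2 := mk 4 adj2.

Lemma php (n m : nat) (f : nat -> nat) : (forall k, (k < n)%nat -> (f k < m)%nat) ->
  (forall k k', (k < n)%nat -> (k' < n)%nat -> f k = f k' -> k = k') -> (n <= m)%nat.
Proof.
  intros Hb Hi.
  assert (H : (length (map f (seq 0 n)) <= length (seq 0 m))%nat).
  { apply NoDup_incl_length.
    - apply NoDup_map_NoDup_ForallPairs; [|apply seq_NoDup].
      intros a b Ha Hb'. apply in_seq in Ha. apply in_seq in Hb'. apply Hi; lia.
    - intros y Hy. apply in_map_iff in Hy. destruct Hy as [x [<- Hx]].
      apply in_seq in Hx. apply in_seq. specialize (Hb x ltac:(lia)). lia. }
  rewrite length_map, !length_seq in H. exact H.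
Qed.

Definition b2 (b : bool) : nat := if b then 1%nat else 0%nat.

Lemma code_inj a b c a' b' c' : (b2 a + 2 * b2 b + 4 * b2 c = b2 a' + 2 * b2 b' + 4 * b2 c')%nat ->
  a = a' /\ b = b' /\ c = c'.
Proof. destruct a, b, c, a', b', c'; simpl; intros; auto; lia. Qed.

Lemma bits k : (k < 16)%nat ->
  k = (b2 (Nat.testbit k 0) + 2 * b2 (Nat.testbit k 1) + 4 * b2 (Nat.testbit k 2)
       + 8 * b2 (Nat.testbit k 3))%nat.
Proof. intros H. do 16 (destruct k as [|k]; [reflexivity|]). lia. Qed.

Lemma not_embed : ~ Embeds n2 n1.
Proof.
  intros [psi [Hin [_ [Hinj Hcom]]]].
  assert (Hc : forall x, InM n2 x -> psi (jump n2 x) = jump n1 (psi x)).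
  { intros x Hx.
    pose proof (Hcom x (solX 4 adj2 x) (solX 3 adj1 (psi x)) Hx
      (solX_sol 4 adj2 ltac:(lia) x Hx) (solX_sol 3 adj1 ltac:(lia) (psi x) (Hin x Hx)) 1
      ltac:(lra)) as H.
    rewrite !solX_pos in H by lra. exact H. }
  set (P := fun k : nat => xS 4 adj2 (fun j => Nat.testbit k j)).
  assert (HP : forall k, InM n2 (P k)) by (intros; apply xS_InM; lia).
  assert (HPJ : forall k, jump n1 (psi (P k)) = psi (fun _ _ => 0)).
  { intros k. rewrite <- Hc by auto. unfold P. fold n2. unfold n2.
    rewrite xS_jump by lia. reflexivity. }
  set (f := fun k => let X := psi (P k) in
     (b2 (sp X 0) + 2 * b2 (sp X 1) + 4 * b2 (sp X 2))%nat).
  assert (H16 : (16 <= 8)%nat); [|lia].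
  apply (php 16 8 f).
  - intros k _. unfold f. destruct (sp _ 0), (sp _ 1), (sp _ 2); simpl; lia.
  - intros k k' Hk Hk' Hf. unfold f in Hf. apply code_inj in Hf.
    destruct Hf as [E0 [E1 E2]].
    assert (E : psi (P k) = psi (P k')).
    { apply (fiber 3 adj1 ltac:(lia)); auto. rewrite !HPJ; reflexivity.
      intros j Hj. destruct j as [|[|[|j]]]; auto; lia. }
    apply Hinj in E; auto.
    assert (Hb : forall j, (j < 4)%nat -> Nat.testbit k j = Nat.testbit k' j).
    { intros j Hj. rewrite <- (xS_sp 4 adj2 ltac:(lia) (fun j => Nat.testbit k j) j Hj).
      rewrite <- (xS_sp 4 adj2 ltac:(lia) (fun j => Nat.testbit k' j) j Hj).
      fold (P k) (P k'). rewrite E. reflexivity. }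
    rewrite (bits k Hk), (bits k' Hk'), !Hb by lia. reflexivity.
Qed.

Ltac bnd x := destruct x as [|[|[|[|x]]]]; try lia.

Lemma sameF_mk N adj N' adj' i j : SameF (mk N adj) i (mk N' adj') j.
Proof.
  split; [reflexivity|split; [intros; split; reflexivity|split; [reflexivity|intros; reflexivity]]].
Qed.

Lemma struct_edges N adj i j : StructId (mk N adj) i j -> adj i j = false /\ adj j i = false.
Proof.
  intros [_ [_ [_ [_ [Z1 [Z2 _]]]]]]. split.
  - destruct (adj i j) eqn:E; auto. exfalso. apply (adj_nz N adj i j E Z1).
  - destruct (adj j i) eqn:E; auto. exfalso. apply (adj_nz N adj j i E Z2).
Qed.

Lemma sid01 : StructId n2 0 1.
Proof.
  split; [simpl; lia|split; [simpl; lia|split; [lia|split; [apply sameF_mk|]]]].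
  split; [apply zero_false; reflexivity|split; [apply zero_false; reflexivity|]].
  intros h Hh H0 H1 x _. simpl in Hh. bnd h; reflexivity.
Qed.

Lemma sid10 : StructId n2 1 0.
Proof.
  split; [simpl; lia|split; [simpl; lia|split; [lia|split; [apply sameF_mk|]]]].
  split; [apply zero_false; reflexivity|split; [apply zero_false; reflexivity|]].
  intros h Hh H0 H1 x _. simpl in Hh. bnd h; reflexivity.
Qed.

Lemma valid1 : ValidUS n1 3 (fun i => i) (fun _ => 1%nat) (fun _ => 0%nat).
Proof.
  split; [intros i Hi; simpl in Hi; lia|split; [|split; [|split; [|split]]]].
  - intros p Hp. split; [intros i [Hi _]; auto|split; [exists p; simpl; split; auto; lia|split]].
    + intros i j [_ Hi] [_ Hj] Hne. lia.
    + intros Bs Hsub Hb Hpw i Hi. split; [apply Hb; auto|].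
      destruct (Nat.eq_dec i p) as [|Hne]; auto. exfalso.
      assert (Bp : Bs p) by (apply Hsub; simpl; split; auto).
      destruct (struct_edges _ _ _ _ (Hpw p i Bp Hi ltac:(auto))) as [E1 E2].
      specialize (Hb i Hi). simpl in Hb. bnd p; bnd i; discriminate.
  - intros; lia.
  - intros p b Hp Hb. exists p. unfold InUnit. simpl. split; [lia|split; [auto|lia]].
  - intros p Hp i i' h Hi Hi' Hh Hpi Hpi' Hne. lia.
  - intros p Hp c0 g Hg _. specialize (Hg p ltac:(simpl; lia) eq_refl). lia.
Qed.

Lemma valid2 : ValidUS n2 3 Nat.pred (fun _ => 1%nat) (fun _ => 0%nat).
Proof.
  split; [intros i Hi; simpl in Hi; bnd i; simpl; lia|split; [|split; [|split; [|split]]]].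
  - intros p Hp. split; [intros i [Hi _]; auto|split].
    { exists (S p). simpl. split; auto; lia. }
    split.
    + intros i j [Hi Hpi] [Hj Hpj] Hne. simpl in Hi, Hj.
      bnd i; bnd j; simpl in *; try lia; [apply sid01|apply sid10].
    + intros Bs Hsub Hb Hpw i Hi. split; [apply Hb; auto|].
      destruct (Nat.eq_dec (Nat.pred i) p) as [|Hne]; auto. exfalso.
      assert (Bp : Bs (S p)) by (apply Hsub; simpl; split; auto; lia).
      assert (Hne' : S p <> i) by (intro; subst; simpl in Hne; lia).
      destruct (struct_edges _ _ _ _ (Hpw (S p) i Bp Hi Hne')) as [E1 E2].
      specialize (Hb i Hi). simpl in Hb. bnd p; bnd i; simpl in *; try lia; discriminate.
  - intros; lia.
  - intros p b Hp Hb. exists (S p). unfold InUnit. simpl. split; [lia|split; [auto|lia]].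
  - intros p Hp i i' h Hi Hi' Hh Hpi Hpi' Hne _ Hph N1 N2.
    apply nz_adj in N1. apply nz_adj in N2. simpl in *.
    bnd i; bnd i'; bnd h; simpl in *; try lia; discriminate.
  - intros p Hp c0 g Hg _. specialize (Hg (S p) ltac:(simpl; lia) eq_refl). lia.
Qed.

Ltac dub_false :=
  left; split;
  [ intros i h [Hi [Hpi Hbi]] [Hh Hph] Hne; simpl in *; bnd i; bnd h; simpl in *; try lia;
    apply zero_false; reflexivity
  | intros; reflexivity ].

Ltac dub_true I H :=
  right; exists I; split; [unfold InUnit; simpl; lia|split;
  [exists H; split; [unfold InPart; simpl; lia|split; [lia|apply adj_nz; reflexivity]]
  | intros h x [Hh Hph] Hne _; simpl in *; bnd h; simpl in *; try lia; reflexivity]].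

Lemma syneq : SynEquiv n1 n2.
Proof.
  exists 3%nat, (fun i => i), (fun _ => 1%nat), (fun _ => 0%nat),
         3%nat, Nat.pred, (fun _ => 1%nat), (fun _ => 0%nat),
         (fun p => p), (fun _ _ => 0%nat).
  split; [exact valid1|split; [exact valid2|split; [reflexivity|split; [reflexivity|]]]].
  split; [auto|split; [auto|split; [intros q Hq; exists q; auto|split; [|split]]]].
  - intros p Hp. split; [intros; lia|split; [intros; lia|intros b' Hb'; exists 0%nat; split; lia]].
  - intros p b q Hp Hb Hq. replace b with 0%nat by lia.
    exists (if adj1 p q then Dlt else fun _ => 0).
    bnd p; bnd q; simpl; split.
    all: first [ dub_false
               | dub_true 0%nat 1%nat | dub_true 0%nat 2%nat | dub_true 1%nat 0%nat
               | dub_true 1%nat 2%nat | dub_true 2%nat 0%nat | dub_true 2%nat 1%nat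
               | dub_true 3%nat 0%nat | dub_true 1%nat 3%nat | dub_true 2%nat 3%nat
               | dub_true 3%nat 1%nat ].
  - intros; apply sameF_mk.
Qed.

Theorem mainTheorem6 :
  exists n : Net, IsNetwork n /\ Dale n /\ ~ DynOptimum n.
Proof.
  exists n1. split; [|split; [apply mk_dale|]].
  - apply mk_network; try lia. intros i Hi. bnd i.
    + exists 1%nat; simpl; repeat split; try lia; reflexivity.
    + exists 0%nat; simpl; repeat split; try lia; reflexivity.
    + exists 0%nat; simpl; repeat split; try lia; reflexivity.
  - intros Hopt. apply not_embed. apply Hopt; [|exact syneq].
    apply mk_network; try lia. intros i Hi. bnd i.
    + exists 2%nat; simpl; repeat split; try lia; reflexivity.
    + exists 3%nat; simpl; repeat split; try lia; reflexivity.
    + exists 0%nat; simpl; repeat split; try lia; reflexivity.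
    + exists 0%nat; simpl; repeat split; try lia; reflexivity.
Qed.
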